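(* Let $0\le a<b$, let $\alpha\in(0,1]$, and let $k:[a,b]\to\mathbb{R}$ be a continuous nonnegative map, differentiable on $[a,b]$, with $k(t)\neq 0$ and $k'(t)\neq 0$. Let $f:[a,b]\to\mathbb{R}$ be continuous on $[a,b]$ and $\alpha$-differentiable at every point of $(a,b)$. Then there exists $c\in(a,b)$ such that $$D^{\alpha}(f)(c)=\frac{f(b)-f(a)}{\frac{k^{\alpha}(b)}{\alpha}-\frac{k^{\alpha}(a)}{\alpha}}.$$
   Context: For $k$ as in the claim, $f:[a,b]\to\mathbb{R}$, $\alpha\in(0,1]$ and $t\in(a,b)$, the generalized fractional derivative of $f$ of order $\alpha$ at $t$ is $$D^{\alpha}(f)(t)=f^{(\alpha)}(t):=\lim_{\varepsilon\to 0}\frac{f\left(t-k(t)+k(t)\,e^{\varepsilon\frac{(k(t))^{-\alpha}}{k'(t)}}\right)-f(t)}{\varepsilon},$$ and $f$ is called $\alpha$-differentiable at $t$ if this limit exists. Here $k^{\alpha}(x)$ denotes $(k(x))^{\alpha}$. *)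

(* Defs.v *)
From Stdlib Require Import Reals.
From Coquelicot Require Import Coquelicot.
Open Scope R_scope.

Definition in_Icc (a b x : R) : Prop := a <= x <= b.

Definition continuous_on_Icc (f : R -> R) (a b : R) : Prop :=
  forall t, in_Icc a b t ->
    filterlim f (within (in_Icc a b) (locally t)) (locally (f t)).

Definition is_derive_on_Icc (k k' : R -> R) (a b : R) : Prop :=
  forall t, in_Icc a b t ->
    filterlim (fun x => (k x - k t) / (x - t))
      (within (fun x => in_Icc a b x /\ x <> t) (locally t)) (locally (k' t)).

(* The difference quotient in the definition of the generalized
   fractional derivative (k' is the derivative of k). *)
Definition gfd_quotient (k k' f : R -> R) (alpha t eps : R) : R :=
  (f (t - k t + k t * exp (eps * (Rpower (k t) (- alpha)) / k' t)) - f t) / eps.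

Definition alpha_differentiable (k k' f : R -> R) (alpha t : R) : Prop :=
  ex_finite_lim (gfd_quotient k k' f alpha t) 0.

Definition gen_frac_deriv (k k' f : R -> R) (alpha t : R) : R :=
  real (Lim (gfd_quotient k k' f alpha t) 0).

(* Main.v *)
Require Import Defs.
From Stdlib Require Import Reals Lra.
From Coquelicot Require Import Coquelicot.
Open Scope R_scope.

Lemma ballR (x e y : R) : ball x e y <-> Rabs (y - x) < e.
Proof. unfold ball; simpl; unfold AbsRing_ball, abs, minus, plus, opp; simpl. tauto. Qed.

Lemma dpl_is_lim (f : R -> R) x l :
  derivable_pt_lim f x l <-> is_lim (fun h => (f (x + h) - f x) / h) 0 l.
Proof.
  rewrite <- is_lim_spec. split.
  - intros H eps. destruct (H eps (cond_pos eps)) as [d Hd].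
    simpl. exists d. intros y Hy Hy0.
    assert (Hy' : Rabs (y - 0) < d) by (apply ballR; exact Hy).
    apply Hd; auto. rewrite Rminus_0_r in Hy'; exact Hy'.
  - intros H eps Heps. destruct (H (mkposreal eps Heps)) as [d Hd].
    exists d. intros h Hh0 Hh. apply (Hd h); auto. apply ballR. rewrite Rminus_0_r; exact Hh.
Qed.

Lemma key (f : R -> R) (t K c L : R) : 0 < K -> c <> 0 ->
  is_lim (fun e => (f (t - K + K * exp (e * c)) - f t) / e) 0 L ->
  derivable_pt_lim f t (L / (K * c)).
Proof.
  intros HK Hc HL.
  set (phi := fun u => ln (1 + u / K) / c).
  assert (Hphi0 : phi 0 = 0).
  { unfold phi. replace (1 + 0 / K) with 1 by (field; lra). rewrite ln_1. field; auto. }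
  assert (H1 : is_derive phi 0 (1 / (K * c))).
  { unfold phi. auto_derive.
    - rewrite Rmult_0_l, Rplus_0_r. lra.
    - rewrite Rmult_0_l, Rplus_0_r. field. split; auto; lra. }
  assert (H2 : is_lim (fun u => phi u / u) 0 (1 / (K * c))).
  { apply (is_lim_ext (fun h => (phi (0 + h) - phi 0) / h)).
    - intros y. rewrite Rplus_0_l, Hphi0, Rminus_0_r. reflexivity.
    - apply dpl_is_lim, is_derive_Reals, H1. }
  assert (H3 : is_lim phi 0 0).
  { rewrite <- Hphi0 at 2. apply is_lim_continuity.
    apply derivable_continuous_pt. exists (1 / (K * c)). apply is_derive_Reals, H1. }
  assert (Hloc : forall u, u <> 0 -> Rabs u < K -> 0 < 1 + u / K /\ phi u <> 0).
  { intros u Hu0 Hu.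
    assert (Hpos : 0 < 1 + u / K).
    { apply Rabs_def2 in Hu. destruct Hu as [Hu1 Hu2].
      replace (1 + u / K) with ((K + u) / K) by (field; lra).
      apply Rdiv_lt_0_compat; lra. }
    split; auto. unfold phi. intro E.
    assert (E2 : ln (1 + u / K) = ln 1).
    { rewrite ln_1. apply (Rmult_eq_reg_r (/ c)); [|apply Rinv_neq_0_compat; auto].
      rewrite Rmult_0_l. exact E. }
    apply ln_inv in E2; [|auto|lra].
    apply Hu0. assert (u / K = 0) by lra.
    replace u with ((u / K) * K) by (field; lra). rewrite H. ring. }
  assert (H4 : Rbar_locally' 0 (fun u => Finite (phi u) <> Finite 0)).
  { simpl. exists (mkposreal K HK). intros u Hu Hu0.
    assert (Hu' : Rabs (u - 0) < K) by (apply ballR; exact Hu).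
    rewrite Rminus_0_r in Hu'. intro E; injection E. apply (Hloc u Hu0 Hu'). }
  assert (H5 := is_lim_comp _ _ _ _ _ HL H3 H4).
  assert (H6 := is_lim_mult _ _ _ _ _ H5 H2 I).
  simpl in H6.
  apply dpl_is_lim.
  replace (L / (K * c)) with (L * (1 / (K * c))) by (field; split; auto; lra).
  eapply is_lim_ext_loc; [|exact H6].
  simpl. exists (mkposreal K HK). intros u Hu Hu0.
  assert (Hu' : Rabs (u - 0) < K) by (apply ballR; exact Hu).
  rewrite Rminus_0_r in Hu'. destruct (Hloc u Hu0 Hu') as [Hp Hph].
  assert (Eexp : exp (phi u * c) = 1 + u / K).
  { unfold phi. replace (ln (1 + u / K) / c * c) with (ln (1 + u / K)) by (field; auto).
    apply exp_ln; auto. }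
  rewrite Eexp. replace (t - K + K * (1 + u / K)) with (t + u) by (field; lra).
  field. split; auto.
Qed.

Lemma deriv_interior (k k' : R -> R) a b t :
  is_derive_on_Icc k k' a b -> a < t < b -> derivable_pt_lim k t (k' t).
Proof.
  intros H Ht. apply dpl_is_lim. unfold is_lim.
  change (filterlim (fun h => (k (t + h) - k t) / h) (locally' 0) (locally (k' t))).
  assert (Hs : filterlim (fun h => t + h) (locally' 0)
             (within (fun x => in_Icc a b x /\ x <> t) (locally t))).
  { intros P [eps HP].
  assert (Hd : 0 < Rmin eps (Rmin (t - a) (b - t))).
  { apply Rmin_glb_lt; [apply cond_pos|apply Rmin_glb_lt; lra]. }
  exists (mkposreal _ Hd). intros y Hy Hy0. change R in y.
  assert (Hy' : Rabs (y - 0) < Rmin eps (Rmin (t - a) (b - t))) by (apply ballR; exact Hy).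
  rewrite Rminus_0_r in Hy'.
  pose proof (Rmin_l eps (Rmin (t - a) (b - t))).
  pose proof (Rmin_r eps (Rmin (t - a) (b - t))).
  pose proof (Rmin_l (t - a) (b - t)). pose proof (Rmin_r (t - a) (b - t)).
  apply Rabs_def2 in Hy'.
  apply HP.
  - apply ballR. replace (t + y - t) with y by ring. apply Rabs_def1; lra.
  - unfold in_Icc. split; [lra|]. intro E. apply Hy0. lra. }
  pose proof (filterlim_comp _ _ _ _ _ _ _ _ Hs (H t ltac:(unfold in_Icc; lra))) as Hc.
  eapply filterlim_ext; [|exact Hc].
  intros x; simpl. replace (t + x - t) with x by ring. reflexivity.
Qed.

Definition clamp (a b x : R) := Rmax a (Rmin b x).

Lemma clamp_id a b x : a <= x <= b -> clamp a b x = x.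
Proof. intros. unfold clamp, Rmax, Rmin. repeat destruct Rle_dec; lra. Qed.

Lemma clamp_in a b x : a <= b -> in_Icc a b (clamp a b x).
Proof. intros. unfold in_Icc, clamp, Rmax, Rmin. repeat destruct Rle_dec; lra. Qed.

Lemma clamp_contr a b x t : a <= t <= b -> Rabs (clamp a b x - t) <= Rabs (x - t).
Proof. intros. unfold clamp, Rmax, Rmin, Rabs. repeat destruct Rle_dec; repeat destruct Rcase_abs; lra. Qed.

Lemma cont_clamp (phi : R -> R) a b t : a <= b -> continuous_on_Icc phi a b -> in_Icc a b t ->
  continuity_pt (fun x => phi (clamp a b x)) t.
Proof.
  intros Hab H Ht. apply continuity_pt_filterlim.
  rewrite (clamp_id a b t Ht).
  eapply filterlim_comp; [|apply H; auto].
  intros P [eps HP]. exists eps. intros y Hy. apply HP.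
  - apply ballR. change R in y. assert (Hy' : Rabs (y - t) < eps) by (apply ballR; exact Hy). clear Hy. rename Hy' into Hy. eapply Rle_lt_trans; [apply clamp_contr; exact Ht|exact Hy].
  - apply clamp_in; auto.
Qed.

Lemma loc_clamp (phi : R -> R) a b t : a < t < b -> locally t (fun x => phi x = phi (clamp a b x)).
Proof.
  intros Ht.
  assert (Hd : 0 < Rmin (t - a) (b - t)) by (apply Rmin_glb_lt; lra).
  exists (mkposreal _ Hd). intros y Hy. change R in y.
  assert (Hy' : Rabs (y - t) < Rmin (t - a) (b - t)) by (apply ballR; exact Hy). clear Hy. rename Hy' into Hy.
  pose proof (Rmin_l (t - a) (b - t)). pose proof (Rmin_r (t - a) (b - t)).
  apply Rabs_def2 in Hy. rewrite clamp_id; [reflexivity|lra].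
Qed.

Lemma deriv_clamp (phi : R -> R) a b t l : a < t < b -> derivable_pt_lim phi t l ->
  derivable_pt_lim (fun x => phi (clamp a b x)) t l.
Proof.
  intros Ht H. apply is_derive_Reals. eapply is_derive_ext_loc; [apply loc_clamp; exact Ht|].
  apply is_derive_Reals; exact H.
Qed.

Lemma pow_deriv alpha y : 0 < alpha -> 0 < y ->
  derivable_pt_lim (fun x => Rpower x alpha / alpha) y (Rpower y (alpha - 1)).
Proof.
  intros Ha Hy. apply is_derive_Reals.
  pose proof (is_derive_scal_l (fun x => Rpower x alpha) y _ (/ alpha)
     (proj2 (is_derive_Reals _ _ _) (derivable_pt_lim_power y alpha Hy))) as H.
  eapply is_derive_ext; [|eapply filterdiff_ext_lin; [exact H|]].
  - intros x. simpl. reflexivity.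
  - intros x. simpl. unfold scal; simpl; unfold mult; simpl. field. lra.
Qed.

Theorem mainTheorem5 (a b alpha : R) (k k' f : R -> R)
  (Ha : 0 <= a) (Hab : a < b)
  (Halpha : 0 < alpha <= 1)
  (Hk_cont : continuous_on_Icc k a b)
  (Hk_nonneg : forall t, in_Icc a b t -> 0 <= k t)
  (Hk_deriv : is_derive_on_Icc k k' a b)
  (Hk_nz : forall t, in_Icc a b t -> k t <> 0)
  (Hk'_nz : forall t, in_Icc a b t -> k' t <> 0)
  (Hf_cont : continuous_on_Icc f a b)
  (Hf_diff : forall t, a < t < b -> alpha_differentiable k k' f alpha t) :
  exists c, a < c < b /\
    gen_frac_deriv k k' f alpha c =
      (f b - f a) / (Rpower (k b) alpha / alpha - Rpower (k a) alpha / alpha).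
Proof.
  assert (Kpos : forall t, in_Icc a b t -> 0 < k t).
  { intros t Ht. destruct (Hk_nonneg t Ht) as [H|H]; auto. exfalso; apply (Hk_nz t Ht); auto. }
  assert (Rpos : forall x y, 0 < Rpower x y) by (intros; unfold Rpower; apply exp_pos).
  set (D := fun t => gen_frac_deriv k k' f alpha t).
  set (dF := fun t => D t / (k t * (Rpower (k t) (- alpha) / k' t))).
  set (dG := fun t => Rpower (k t) (alpha - 1) * k' t).
  set (F := fun x => f (clamp a b x)).
  set (g := fun x => Rpower x alpha / alpha).
  set (G := fun x => g (k (clamp a b x))).
  set (Kc := fun x => k (clamp a b x)).
  assert (HF : forall t (P : a < t < b), derivable_pt_lim F t (dF t)).
  { intros t Ht. unfold F. apply deriv_clamp; auto. unfold dF.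
    assert (Hkt : 0 < k t) by (apply Kpos; unfold in_Icc; lra).
    assert (Hk't : k' t <> 0) by (apply Hk'_nz; unfold in_Icc; lra).
    apply key; auto.
    - unfold Rdiv. apply Rmult_integral_contrapositive. split.
      + apply Rgt_not_eq, Rpos.
      + apply Rinv_neq_0_compat; auto.
    - pose proof (Lim_correct' _ _ (Hf_diff t Ht)) as HL.
      eapply is_lim_ext; [|exact HL].
      intros y. unfold gfd_quotient. simpl.
      replace (y * Rpower (k t) (- alpha) / k' t) with (y * (Rpower (k t) (- alpha) / k' t))
        by (unfold Rdiv; ring). reflexivity. }
  assert (HG : forall t (P : a < t < b), derivable_pt_lim G t (dG t)).
  { intros t Ht. unfold G. apply (deriv_clamp (fun x => g (k x))); auto. unfold dG.
    assert (Hkt : 0 < k t) by (apply Kpos; unfold in_Icc; lra).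
    apply (derivable_pt_lim_comp k g).
    - apply (deriv_interior k k' a b); auto.
    - apply pow_deriv; lra. }
  assert (HK : forall t (P : a < t < b), derivable_pt_lim Kc t (k' t)).
  { intros t Ht. unfold Kc. apply deriv_clamp; auto. apply (deriv_interior k k' a b); auto. }
  assert (gcont : continuous_on_Icc (fun x => g (k x)) a b).
  { intros t Ht. eapply filterlim_comp; [apply Hk_cont; auto|].
    apply continuity_pt_filterlim, derivable_continuous_pt.
    exists (Rpower (k t) (alpha - 1)). apply pow_deriv; [lra|apply Kpos; auto]. }
  assert (Hia : in_Icc a b a) by (unfold in_Icc; lra).
  assert (Hib : in_Icc a b b) by (unfold in_Icc; lra).
  assert (Hkab : k a <> k b).
  { intro E.
    destruct (Rolle Kc a b (fun x P => exist _ (k' x) (HK x P))) as [c [P Hc]].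
    - intros x Hx. apply cont_clamp; auto; lra.
    - exact Hab.
    - unfold Kc. rewrite !clamp_id; auto; lra.
    - simpl in Hc. apply (Hk'_nz c); auto. unfold in_Icc; lra. }
  assert (Hgab : Rpower (k b) alpha / alpha - Rpower (k a) alpha / alpha <> 0).
  { intro E. apply Hkab.
    assert (E2 : Rpower (k b) alpha = Rpower (k a) alpha).
    { apply (Rmult_eq_reg_r (/ alpha)); [|apply Rinv_neq_0_compat; lra].
      fold (Rdiv (Rpower (k b) alpha) alpha). fold (Rdiv (Rpower (k a) alpha) alpha). lra. }
    unfold Rpower in E2. apply exp_inv in E2.
    apply Rmult_eq_reg_l in E2; [|lra].
    symmetry. apply ln_inv; auto. }
  destruct (MVT F G a b (fun x P => exist _ (dF x) (HF x P)) (fun x P => exist _ (dG x) (HG x P)))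
    as [c [P E]].
  - exact Hab.
  - intros x Hx. apply cont_clamp; auto; lra.
  - intros x Hx. apply (cont_clamp (fun x => g (k x))); auto; lra.
  - simpl in E. exists c. split; [exact P|].
    unfold F, G in E. rewrite !(clamp_id a b a), !(clamp_id a b b) in E; try lra.
    unfold g in E. unfold dF, dG in E. fold (D c).
    assert (Hkc : 0 < k c) by (apply Kpos; unfold in_Icc; lra).
    assert (Hk'c : k' c <> 0) by (apply Hk'_nz; unfold in_Icc; lra).
    assert (HR := Rpos (k c) (- alpha)).
    assert (HPR : Rpower (k c) (alpha - 1) * k c * Rpower (k c) (- alpha) = 1).
    { rewrite <- (Rpower_1 (k c)) at 2; auto.
      rewrite <- !Rpower_plus. replace (alpha - 1 + 1 + - alpha) with 0 by ring.
      apply Rpower_O; auto. }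
    set (gd := Rpower (k b) alpha / alpha - Rpower (k a) alpha / alpha) in *.
    assert (E2 : gd * D c = (f b - f a) * (Rpower (k c) (alpha - 1) * k c * Rpower (k c) (- alpha))).
    { transitivity (gd * (D c / (k c * (Rpower (k c) (- alpha) / k' c))) * (k c * (Rpower (k c) (- alpha) / k' c))).
      - field. split; [auto|]. split; lra.
      - rewrite E. field. auto. }
    rewrite HPR, Rmult_1_r in E2. rewrite <- E2. field. exact Hgab.
Qed.
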